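(* Let $n,m$ be positive integers and $\alpha_1,\dots,\alpha_n$ the simple roots of type $A_n$. There exists a bijection $\varphi_n:\mathcal{R}^m_n\to\mathcal{P}^m_n$ such that for every $i\in\{1,\dots,n\}$ and every $R\in\mathcal{R}^m_n$, the hyperplane $H_{\alpha_i,m}$ is a separating wall of $R$ if and only if the $i$-th part of the partition $\varphi_n(R)$ equals $(n-i+1)m$.
   Context: Type $A_n$: $V=\{x\in\mathbb{R}^{n+1}:\sum x_i=0\}$ with standard inner product; positive roots $\alpha_{ij}=\varepsilon_i-\varepsilon_{j+1}$ ($1\le i\le j\le n$), simple roots $\alpha_i=\varepsilon_i-\varepsilon_{i+1}$. $H_{\alpha,k}=\{v\in V:\langle v,\alpha\rangle=k\}$. $\mathrm{Cat}^m(A_n)$ is the arrangement of the $H_{\alpha,k}$, $\alpha$ positive, $0\le k\le m$. $\mathcal{R}^m_n$ is the set of dominant regions (connected components of the complement contained in $\{v:\langle v,\alpha\rangle\ge 0\ \forall\alpha>0\}$). A separating wall of a region $R$ is a hyperplane of the arrangement supporting a facet of $R$ such that $R$ and the origin lie on different sides of it. $\mathcal{P}^m_n$ is the set of integer partitions $\lambda=(\lambda_1,\dots,\lambda_n)$ with $\lambda_1\ge\lambda_2\ge\cdots\ge\lambda_n\ge0$ and $\lambda_i\le m(n-i+1)$ for all $i$. *)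

(* Defs.v *)
From HB Require Import structures.
From mathcomp Require Import all_boot all_order all_algebra.
From mathcomp Require Import all_classical all_reals all_analysis.
Set Implicit Arguments. Unset Strict Implicit. Unset Printing Implicit Defensive.
Import Order.TTheory GRing.Theory Num.Theory.
Import numFieldNormedType.Exports.
Local Open Scope classical_set_scope.
Local Open Scope ring_scope.

Section Arrangement.
Variable R : realType.
Variable n : nat. (* type A_n; ambient space R^(n+1) *)

Definition co (v : 'rV[R]_(n.+1)) (a : 'I_n.+1) : R := v ord0 a.

Definition Vspace : set 'rV[R]_(n.+1) := [set v | \sum_(a < n.+1) co v a = 0].

(* positive roots are eps_a - eps_b with a < b (0-indexed);
   <v, eps_a - eps_b> = v_a - v_b (standard inner product) *)
Definition proot (v : 'rV[R]_(n.+1)) (a b : 'I_n.+1) : R := co v a - co v b.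

Definition hyp (a b : 'I_n.+1) (k : nat) : set 'rV[R]_(n.+1) :=
  [set v | Vspace v /\ proot v a b = k%:R].

Definition in_cat (m : nat) (a b : 'I_n.+1) (k : nat) : Prop :=
  (a < b)%N /\ (k <= m)%N.

Definition cat_complement (m : nat) : set 'rV[R]_(n.+1) :=
  [set v | Vspace v /\ forall a b k, in_cat m a b k -> ~ hyp a b k v].

Definition is_region (m : nat) (Rg : set 'rV[R]_(n.+1)) : Prop :=
  exists2 x, cat_complement m x & Rg = connected_component (cat_complement m) x.

Definition dominant_cone : set 'rV[R]_(n.+1) :=
  [set v | forall a b : 'I_n.+1, (a < b)%N -> 0 <= proot v a b].

Definition is_dominant_region (m : nat) (Rg : set 'rV[R]_(n.+1)) : Prop :=
  is_region m Rg /\ Rg `<=` dominant_cone.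

(* H supports a facet of Rg: H meets the closure of Rg in a set with
   nonempty relative interior in H (i.e. an (n-1)-dimensional face). *)
Definition supports_facet (Rg H : set 'rV[R]_(n.+1)) : Prop :=
  exists2 p, H p & exists2 U, nbhs p U & (U `&` H) `<=` closure Rg.

Definition separating_wall (m : nat) (Rg : set 'rV[R]_(n.+1))
    (a b : 'I_n.+1) (k : nat) : Prop :=
  [/\ in_cat m a b k, supports_facet Rg (hyp a b k) &
      forall x, Rg x -> (proot x a b - k%:R) * (proot 0 a b - k%:R) < 0].

Definition dominant_regions (m : nat) :=
  {Rg : set 'rV[R]_(n.+1) | is_dominant_region m Rg}.

End Arrangement.

(* simple root alpha_{i+1} = eps_i - eps_{i+1} (0-indexed i : 'I_n) *)
Definition sroot_l (n : nat) (i : 'I_n) : 'I_n.+1 := widen_ord (leqnSn n) i.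
Definition sroot_r (n : nat) (i : 'I_n) : 'I_n.+1 := lift ord0 i.

(* P^m_n: lambda_1 >= ... >= lambda_n >= 0, lambda_i <= m(n-i+1);
   stored 0-indexed: lam j = lambda_{j+1}, bound m (n - j). *)
Definition is_bounded_partition (n m : nat) (lam : {ffun 'I_n -> nat}) : bool :=
  [forall i : 'I_n, forall j : 'I_n, (i <= j)%N ==> (lam j <= lam i)%N] &&
  [forall i : 'I_n, (lam i <= muln m (n - i))%N].

Definition bounded_partitions (n m : nat) :=
  {lam : {ffun 'I_n -> nat} | @is_bounded_partition n m lam}.

(* Main.v *)
Require Import Defs.
From HB Require Import structures.
From mathcomp Require Import all_boot all_order all_algebra.
From mathcomp Require Import all_classical all_reals all_analysis.
From mathcomp Require Import ring lra zify.
Set Implicit Arguments. Unset Strict Implicit. Unset Printing Implicit Defensive.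
Import Order.TTheory GRing.Theory Num.Theory.
Import numFieldNormedType.Exports.
Local Open Scope classical_set_scope.
Local Open Scope ring_scope.

Section Topo.
Variable R : realType.
Variable n m : nat.
Local Notation V := 'rV[R]_(n.+1).
Local Notation C := (@cat_complement R n m).

Definition sgeq (x y : V) := forall (a b : 'I_n.+1) (k : nat), (a < b)%N -> (k <= m)%N ->
  (k%:R < proot x a b) = (k%:R < proot y a b).

Lemma C_neq x (a b : 'I_n.+1) k : C x -> (a < b)%N -> (k <= m)%N -> proot x a b != k%:R.
Proof. by move=> [Vx Cx] ab km; apply/eqP => e; apply: (Cx a b k) => //. Qed.

Lemma proot_cont (a b : 'I_n.+1) : continuous (fun y : V => proot y a b).
Proof.
move=> y; rewrite /proot /co.
have := @continuousB R R V (fun z : V => z ord0 a) (fun z : V => z ord0 b) y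
  (@coord_continuous R 1 n.+1 ord0 a y) (@coord_continuous R 1 n.+1 ord0 b y).
by [].
Qed.

Lemma sep_open (T : topologicalType) (A B : set T) : open A -> open B ->
  A `&` B = set0 -> separated A B.
Proof.
move=> oA oB AB; split.
- apply/seteqP; split => // z [clz Bz].
  have [w [Aw Bw]] := clz B (open_nbhs_nbhs (conj oB Bz)).
  by have : (A `&` B) w by []; rewrite AB.
- apply/seteqP; split => // z [Az clz].
  have [w [Bw Aw]] := clz A (open_nbhs_nbhs (conj oA Az)).
  by have : (A `&` B) w by []; rewrite AB.
Qed.

Lemma comp_sgeq x y : connected_component C x y -> sgeq x y.
Proof.
move=> cxy a b k ab km.
pose f := fun z : V => proot z a b.
pose A := f @^-1` [set r | k%:R < r].
pose B := f @^-1` [set r | r < k%:R].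
have oA : open A by apply: open_comp => // z _; exact: proot_cont.
have oB : open B by apply: open_comp => // z _; exact: proot_cont.
have AB : A `&` B = set0.
  by apply/seteqP; split => // z [/= h1 h2]; move: (lt_trans h1 h2); rewrite ltxx.
have sub : connected_component C x `<=` A `|` B.
  move=> z /connected_component_sub Cz.
  have := C_neq Cz ab km; rewrite neq_lt => /orP[h|h]; [right|left]; exact: h.
have Cx : C x by case: cxy => D [] + + _ _; move=> Dx DC; exact: DC.
have xx := connected_component_refl Cx.
have [sA|sB] := connected_subset (sep_open oA oB AB) sub (@component_connected _ C x).
- by rewrite (sA _ xx) (sA _ cxy).
- have h1 := sB _ xx; have h2 := sB _ cxy; rewrite /B /f /= in h1 h2.
  by rewrite !(lt_gtF h1, lt_gtF h2).
Qed.

Lemma conv_gt (k p q t : R) : 0 <= t -> t <= 1 -> k < p -> k < q -> k < p + t * (q - p).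
Proof. move=> t0 t1 kp kq.
have h1 : 0 <= (1 - t) * (p - k) by apply: mulr_ge0; lra.
have [t00|tp] := eqVneq t 0; first by rewrite t00 mul0r addr0.
have h2 : 0 < t * (q - k) by apply: mulr_gt0; [rewrite lt_neqAle eq_sym tp|]; lra.
nra. Qed.

Lemma conv_lt (k p q t : R) : 0 <= t -> t <= 1 -> p < k -> q < k -> p + t * (q - p) < k.
Proof. move=> t0 t1 kp kq.
have := @conv_gt (- k) (- p) (- q) t t0 t1; rewrite !ltrN2 => /(_ kp kq).
have -> : t * (- q - - p) = - (t * (q - p)) by ring.
lra.
Qed.

Definition segm (x z : V) (t : R) : V := x + t *: (z - x).

Lemma co_segm x z t c : co (segm x z t) c = co x c + t * (co z c - co x c).
Proof. by rewrite /co /segm !mxE. Qed.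

Lemma proot_segm x z t a b :
  proot (segm x z t) a b = proot x a b + t * (proot z a b - proot x a b).
Proof. rewrite /proot !co_segm; ring. Qed.

Lemma segm_S x z t : 0 <= t -> t <= 1 -> C x -> C z -> sgeq x z ->
  C (segm x z t) /\ sgeq x (segm x z t).
Proof.
move=> t0 t1 Cx Cz sxz.
have key (a b : 'I_n.+1) k : (a < b)%N -> (k <= m)%N ->
   and ((k%:R < proot (segm x z t) a b) = (k%:R < proot x a b))
   (proot (segm x z t) a b != k%:R).
  move=> ab km; rewrite proot_segm.
  have := C_neq Cx ab km; have := C_neq Cz ab km; have := sxz a b k ab km.
  rewrite !neq_lt => e /orP[h1|h1] /orP[h2|h2].
  - have := conv_lt t0 t1 h2 h1 => h; split; last by rewrite h.
    by rewrite (lt_gtF h) (lt_gtF h2).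
  - by move: e; rewrite h2 (lt_gtF h1).
  - by move: e; rewrite h1 (lt_gtF h2).
  - have := conv_gt t0 t1 h2 h1 => h; split; last by rewrite h orbT.
    by rewrite h h2.
split; last by move=> a b k ab km; rewrite (key a b k ab km).1.
case: Cx => Vx _; case: Cz => Vz _; split.
  rewrite /Vspace /=; under eq_bigr do rewrite co_segm.
  rewrite big_split /= -mulr_sumr sumrB.
  by move: Vx Vz; rewrite /Vspace /= => -> ->; rewrite subrr mulr0 addr0.
move=> a b k [ab km] [_ e]; have := (key a b k ab km).2; by rewrite e eqxx.
Qed.

Lemma sgeq_comp x y : C x -> C y -> sgeq x y -> connected_component C x y.
Proof.
move=> Cx Cy sxy.
pose S := [set z | C z /\ sgeq x z].
pose U := \bigcup_(z in S) [set segm x z t | t in `[0, 1]].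
have sgrefl : sgeq x x by [].
have US : U `<=` C.
  move=> w [z [Cz sz] [t /= tin <-]].
  move: tin; rewrite in_itv /= => /andP[t0 t1].
  exact: (segm_S t0 t1 Cx Cz sz).1.
have Ux : U x.
  exists x; first by split.
  by exists 0; [rewrite /= in_itv /= lexx ler01|rewrite /segm scale0r addr0].
have Uy : U y.
  exists y; first by split.
  by exists 1; [rewrite /= in_itv /= lexx ler01|rewrite /segm scale1r addrC subrK].
apply: (connected_component_max Ux US) => //.
apply: bigcup_connected.
  exists x => z _; exists 0; first by rewrite /= in_itv /= lexx ler01.
  by rewrite /segm scale0r addr0.
move=> z _; apply: connected_continuous_connected; first exact: segment_connected.
apply: continuous_subspaceT => t.
have := @continuousD R V R (fun=> x) (fun s : R => s *: (z - x)) t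
  (@cst_continuous _ _ x t) (@continuousZr_tmp R V R id (z - x) t (fun U h => h)).
by [].
Qed.


Lemma ball_co (p q : V) e : ball p e q -> forall c, `|co p c - co q c| < e.
Proof. move=> [_ h] c; have := h ord0 c; rewrite -ball_normE /ball_ /=; done. Qed.

Lemma co_ball (p q : V) e : 0 < e -> (forall c, `|co p c - co q c| < e) -> ball p e q.
Proof. move=> e0 h; split => // i j; rewrite (ord1 i) -ball_normE /ball_ /=; exact: h. Qed.

Lemma pos_lb (T : finType) (F : T -> R) : (forall t, 0 < F t) ->
  exists2 e, 0 < e & forall t, e <= F t.
Proof.
move=> Fp.
suff H : forall s : seq T, exists2 e, 0 < e & forall t, t \in s -> e <= F t.
  by have [e e0 he] := H (enum T); exists e => // t; apply: he; rewrite mem_enum.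
elim=> [|u s [e e0 he]]; first by exists 1.
exists (Num.min e (F u)); first by rewrite lt_min e0 Fp.
move=> t; rewrite inE => /orP[/eqP ->|ts]; first by rewrite ge_min lexx orbT.
by rewrite ge_min he.
Qed.

Lemma near_side (x y k d : R) : d <= `|x - k| -> `|y - x| < d ->
  ((k < y) = (k < x)) /\ y != k.
Proof.
move=> h1 h2; move: h2; rewrite ltr_norml => /andP[h4 h5].
have [xk|xk] := lerP k x.
  move: h1; rewrite ger0_norm; last by rewrite subr_ge0.
  move=> h1; have kx : k < x by lra.
  have ky : k < y by lra.
  by rewrite kx ky; split => //; apply/eqP => e; lra.
move: h1; rewrite ltr0_norm; last by rewrite subr_lt0.
move=> h1; have ky : y < k by lra.
by rewrite (lt_gtF ky) (lt_gtF xk); split => //; apply/eqP => e; lra.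
Qed.

Lemma sum_ind (N i : nat) : \sum_(c < N) (((c <= i)%N)%:R : R) = (minn N i.+1)%:R.
Proof.
elim: N => [|N IH]; first by rewrite big_ord0 min0n.
rewrite big_ord_recr /= IH -natrD; congr (_%:R).
case: (leqP N i) => h /=; lia.
Qed.

Lemma facet x (i : 'I_n) : C x -> dominant_cone x ->
  m%:R < proot x (sroot_l i) (sroot_r i) ->
  supports_facet (connected_component C x) (hyp (sroot_l i) (sroot_r i) m).
Proof.
move=> Cx Dx hgap.
set a := sroot_l i; set a' := sroot_r i.
have va : (a : nat) == i by [].
have va' : (a' : nat) == i.+1 by [].
pose F := fun t : 'I_n.+1 * 'I_n.+1 * 'I_m.+1 =>
   if (t.1.1 < t.1.2)%N then `|proot x t.1.1 t.1.2 - (t.2 : nat)%:R| else 1.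
have Fpos : forall t, 0 < F t.
  move=> [[c e] k]; rewrite /F /=; case: ifP => ce //.
  by rewrite normr_gt0 subr_eq0; apply: C_neq Cx ce _; rewrite -ltnS.
have [d0 d0p hd0] := pos_lb Fpos.
have marg (c e : 'I_n.+1) k : (c < e)%N -> (k <= m)%N -> d0 <= `|proot x c e - k%:R|.
  move=> ce km; have := hd0 ((c, e), Ordinal (km : (k < m.+1)%N)); by rewrite /F /= ce.
have pos (c e : 'I_n.+1) : (c < e)%N -> d0 <= proot x c e.
  move=> ce; have := marg c e 0%N ce (leq0n _); rewrite subr0 ger0_norm //.
  exact: Dx.
have nneg (c e : 'I_n.+1) : (c <= e)%N -> 0 <= proot x c e.
  rewrite leq_eqVlt => /orP[/eqP ce|ce]; last exact: Dx.
  have -> : c = e by apply/val_inj.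
  by rewrite /proot subrr.
pose ind (c : 'I_n.+1) : R := if (c <= i)%N then 1 else 0.
pose K : R := (i.+1)%:R / (n.+1)%:R.
pose w : V := \row_c (ind c - K).
have cow c : co w c = ind c - K by rewrite /co mxE.
have K01 : 0 <= K <= 1.
  rewrite /K divr_ge0 ?ler0n //= ler_pdivrMr ?ltr0n // mul1r ler_nat.
  by rewrite ltnS ltnW.
have sumind : \sum_(c < n.+1) ind c = (i.+1)%:R.
  rewrite -[RHS](_ : (minn n.+1 i.+1)%:R = _); last first.
    by congr (_%:R); apply/minn_idPr; rewrite ltnS ltnW.
  rewrite -sum_ind; apply: eq_bigr => c _; rewrite /ind; by case: (c <= i)%N.
have sumw : \sum_(c < n.+1) co w c = 0.
  under eq_bigr do rewrite cow.
  rewrite sumrB sumind sumr_const card_ord /K.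
  rewrite -[X in _ - X]mulr_natr divfK; first by rewrite subrr.
  by rewrite pnatr_eq0.
have coa y s c : co (y + s *: w) c = co y c + s * co w c by rewrite /co !mxE.
have prw y s c e : proot (y + s *: w) c e = proot y c e + s * (ind c - ind e).
  by rewrite /proot !coa !cow; ring.
have Vw y s : Vspace y -> Vspace (y + s *: w).
  rewrite /Vspace /= => hy.
  under eq_bigr do rewrite coa.
  by rewrite big_split /= -mulr_sumr sumw mulr0 addr0.
have ia : ind a = 1 by rewrite /ind (eqP va) leqnn.
have ia' : ind a' = 0 by rewrite /ind (eqP va') ltnn.
pose dd := proot x a a' - m%:R.
pose p := x + (- dd) *: w.
have Hp : hyp a a' m p.
  split; first exact: Vw Cx.1.
  by rewrite prw ia ia' /dd; ring.
exists p => //.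
have d2 : 0 < d0 / 2 by rewrite divr_gt0.
exists (ball p (d0 / 2)); first exact: nbhsx_ballx.
move=> q [bpq Hq].
have dq c : `|co p c - co q c| < d0 / 2 := ball_co bpq c.
have dpq c e : `|proot q c e - proot p c e| < d0.
  move: (dq c) (dq e); rewrite /proot !ltr_norml => /andP[h1 h2] /andP[h3 h4].
  by apply/andP; split; lra.
move=> B /nbhs_ex [δ hB].
have δp : 0 < δ%:num by [].
pose t := δ%:num / 2.
have tp : 0 < t by rewrite divr_gt0.
pose qt := q + t *: w.
have wle c : `|co w c| <= 1.
  rewrite cow /ind ler_norml; case: (c <= i)%N; move: K01 => /andP[k0 k1]; apply/andP; split; lra.
exists qt; split; last first.
  apply: hB; apply: co_ball => // c.
  rewrite coa opprD addrA subrr add0r normrN normrM (gtr0_norm tp).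
  have := wle c; have := tp; rewrite /t => h1 h2.
  have : δ%:num / 2 * `|co w c| <= δ%:num / 2 by rewrite ler_piMr // ltW.
  lra.
have key (c e : 'I_n.+1) k : (c < e)%N -> (k <= m)%N ->
    ((k%:R < proot qt c e) = (k%:R < proot x c e)) /\ proot qt c e != k%:R.
  move=> ce km.
  have kmR : k%:R <= m%:R :> R by rewrite ler_nat.
  rewrite /qt prw.
  have pp : proot p c e = proot x c e + - dd * (ind c - ind e) by rewrite prw.
  have dce := dpq c e; rewrite pp in dce.
  have mce := marg c e k ce km.
  rewrite /ind in pp dce *.
  move: dce; case: (leqP c i) => ci; case: (leqP e i) => ei dce.
  - rewrite !subrr !mulr0 !addr0 in dce *; exact: near_side mce dce.
  - rewrite subr0 mulr1 in dce *.
    have ca : (c <= a)%N by rewrite (eqP va).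
    have a'e : (a' <= e)%N by rewrite (eqP va').
    have decomp : proot x c e = proot x c a + proot x a a' + proot x a' e.
      by rewrite /proot; ring.
    have h1 := nneg c a ca; have h2 := nneg a' e a'e.
    have xbig : m%:R < proot x c e by lra.
    have qbig : m%:R <= proot q c e.
      have [/andP[/eqP ec /eqP ee]|] := boolP (((c : nat) == a) && ((e : nat) == a')).
        have -> : c = a by apply/val_inj.
        have -> : e = a' by apply/val_inj.
        by rewrite Hq.2.
      rewrite negb_and => /orP[nc|ne].
        have lt : (c < a)%N by rewrite ltn_neqAle nc ca.
        have := pos c a lt; rewrite /dd in dce; move: dce; rewrite ltr_norml => /andP[? ?].
        lra.
      have lt : (a' < e)%N by rewrite ltn_neqAle eq_sym ne a'e.
      have := pos a' e lt; rewrite /dd in dce; move: dce; rewrite ltr_norml => /andP[? ?].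
      lra.
    have l1 : k%:R < proot q c e + t by lra.
    have l2 : k%:R < proot x c e by lra.
    by rewrite l1 l2; split => //; rewrite gt_eqF.
  - by exfalso; have := leq_ltn_trans (ltnW ce) (leq_ltn_trans ei ci); rewrite ltnn.
  - rewrite !subrr !mulr0 !addr0 in dce *; exact: near_side mce dce.
apply: sgeq_comp => //.
  split; first exact: Vw Hq.1.
  move=> c e k [ce km] [_ h]; have := (key c e k ce km).2; by rewrite h eqxx.
by move=> c e k ce km; rewrite (key c e k ce km).1.
Qed.

End Topo.

Local Close Scope classical_set_scope.

Lemma downset_sub (T : finType) (D A B : {set T}) (lt : rel T) :
  A \subset D -> B \subset D ->
  {in D &, forall t t', t != t' -> lt t t' || lt t' t} ->
  (forall t t', t \in D -> t' \in A -> lt t t' -> t \in A) ->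
  (forall t t', t \in D -> t' \in B -> lt t t' -> t \in B) ->
  #|A| = #|B| -> A \subset B.
Proof.
move=> AD BD tot dA dB cAB; apply/negPn/negP => /subsetPn [t tA tB].
have BA : B \proper A.
  rewrite properE; apply/andP; split; last by apply/subsetPn; exists t.
  apply/fintype.subsetP => t' t'B.
  have tD : t \in D by apply: (fintype.subsetP AD).
  have t'D : t' \in D by apply: (fintype.subsetP BD).
  have ne : t != t' by apply/eqP => e; move: tB; rewrite e t'B.
  have /orP[h|h] := tot t t' tD t'D ne.
  - by move: tB; rewrite (dB t t' tD t'B h).
  - exact: dA t' t t'D tA h.
by move: (proper_card BA); rewrite cAB ltnn.
Qed.

Lemma downset_eq (T : finType) (D A B : {set T}) (lt : rel T) :
  A \subset D -> B \subset D ->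
  {in D &, forall t t', t != t' -> lt t t' || lt t' t} ->
  (forall t t', t \in D -> t' \in A -> lt t t' -> t \in A) ->
  (forall t t', t \in D -> t' \in B -> lt t t' -> t \in B) ->
  #|A| = #|B| -> A = B.
Proof.
move=> AD BD tot dA dB cAB; apply/eqP; rewrite finset.eqEsubset.
by rewrite (downset_sub AD BD tot dA dB cAB) (downset_sub BD AD tot dB dA (esym cAB)).
Qed.

Lemma count_enum_set (T : finType) (A : {set T}) (P : pred T) :
  count P (enum A) = #|[set u in A | P u]|.
Proof.
rewrite -size_filter -(card_uniqP (filter_uniq _ (enum_uniq _))).
by apply: eq_card => u; rewrite mem_filter mem_enum !inE andbC.
Qed.

Section Pick.
Variable R : realType.

Lemma seq_min (s : seq R) : s != [::] -> exists2 u, u \in s & forall v, v \in s -> u <= v.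
Proof.
elim: s => [|x s IH] // _.
have [->|ne] := eqVneq s [::].
  by exists x; [rewrite mem_head|move=> v; rewrite inE => /eqP ->].
have [u us hu] := IH ne.
have [xu|ux] := leP x u.
  exists x; first by rewrite mem_head.
  move=> v; rewrite inE => /orP[/eqP ->//|vs]; exact: le_trans xu (hu v vs).
exists u; first by rewrite inE us orbT.
move=> v; rewrite inE => /orP[/eqP ->|vs]; [exact: ltW|exact: hu].
Qed.

Lemma gap (s : seq R) (t : R) : exists t', [/\ t < t', t' \notin s &
  forall v, v \in s -> (v < t') = (v <= t)].
Proof.
pose U := [seq v <- s | t < v].
have [U0|Un] := eqVneq U [::].
  have hs v : v \in s -> v <= t.
    move=> vs; rewrite leNgt; apply/negP => tv.
    have : v \in U by rewrite mem_filter tv vs.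
    by rewrite U0.
  exists (t + 1); split; first lra.
    apply/negP => /hs; lra.
  by move=> v /hs vt; apply/idP/idP => _ //; lra.
have [u uU hu] := seq_min Un.
move: (uU); rewrite mem_filter => /andP[tu us].
exists ((t + u) / 2); split; first lra.
  apply/negP => hs.
  have : (t + u) / 2 \in U by rewrite mem_filter hs andbT; lra.
  by move/hu; lra.
move=> v vs; have [vt|tv] := leP v t.
  by apply/idP; lra.
have : v \in U by rewrite mem_filter tv vs.
by move/hu => uv; apply/negP; lra.
Qed.

Lemma pick_count (s : seq R) (L : R) (r : nat) : uniq s -> L \notin s ->
  (count (fun v : R => (v < L)%R) s <= r)%N -> (r <= size s)%N ->
  exists t, [/\ L < t, t \notin s & count (fun v : R => (v < t)%R) s = r].
Proof.
move=> us Ls h1 h2.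
have [k ek] : exists k, r = (count (fun v : R => (v < L)%R) s + k)%N.
  by exists (r - count (fun v : R => (v < L)%R) s)%N; rewrite subnKC.
rewrite ek in h2 *; clear ek h1 r.
move: h2; elim: k => [|k IH] h2.
  have [t [Lt ts ht]] := gap s L.
  exists t; split => //; rewrite addn0; apply: eq_in_count => v vs /=.
  rewrite ht // le_eqVlt; case: eqVneq => //= e.
  by move: Ls; rewrite -e vs.
have h2' : (count (fun v : R => (v < L)%R) s + k <= size s)%N.
  by rewrite addnS in h2; exact: ltnW h2.
have [t [Lt ts ht]] := IH h2'.
set c := (count (fun v : R => (v < L)%R) s + k)%N in ht h2 h2'.
pose U := [seq v <- s | t < v].
have Un : U != [::].
  apply/eqP => U0.
  have : count (fun v : R => (v < t)%R) s = size s.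
    apply/eqP; rewrite -all_count; apply/allP => v vs.
    rewrite lt_neqAle; apply/andP; split.
      by apply/negP => /eqP e; move: ts; rewrite -e vs.
    rewrite leNgt; apply/negP => tv.
    have : v \in U by rewrite mem_filter tv vs.
    by rewrite U0.
  by move=> e; move: h2; rewrite addnS -/c -ht e ltnn.
have [u uU hu] := seq_min Un.
move: (uU); rewrite mem_filter => /andP[tu usi].
have [t' [ut' t's ht']] := gap s u.
exists t'; split => //; first lra.
rewrite (eq_in_count (a2 := predU (fun v : R => (v < t)%R) (pred1 u))); last first.
  move=> v vs /=; rewrite ht' //.
  have [vt|tv] := ltP v t.
    by rewrite /= (ltW (lt_trans vt tu)).
  rewrite /=; case: (eqVneq v u) => [->|vu]; first by rewrite lexx.
  rewrite /= le_eqVlt (negPf vu) /=.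
  apply/negP => vlu.
  have tv' : t < v.
    rewrite lt_neqAle tv andbT; apply/negP => /eqP e; move: ts; rewrite e vs.
    by [].
  have : v \in U by rewrite mem_filter tv' vs.
  by move/hu; lra.
have := count_predUI (fun v : R => (v < t)%R) (pred1 u) s.
have -> : count (predI (fun v : R => (v < t)%R) (pred1 u)) s = 0%N.
  apply/eqP; rewrite -leqn0 leqNgt -has_count; apply/hasPn => v _ /=.
  by apply/negP => /andP[vt /eqP e]; move: vt; rewrite e; lra.
rewrite addn0 => ->.
by rewrite ht (count_uniq_mem _ us) usi addnS addn1.
Qed.

End Pick.

Lemma card_gt N a : #|[set c : 'I_N | (a < c)%N]| = (N - a.+1)%N.
Proof.
rewrite cardsE cardE /enum_mem -enumT /=.
rewrite size_filter.
have -> : count (fun c : 'I_N => (a < c)%N) (enum 'I_N) = count (fun c => a < c)%N (map val (enum 'I_N)) by rewrite count_map.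
rewrite val_enum_ord.
elim: N => [|N IH]; first by [].
by rewrite -[N.+1]addn1 iotaD count_cat IH add0n /= addn0; lia.
Qed.

Section Comb.
Variable R : realType.
Variable n m : nat.
Local Notation I := 'I_n.+1.

Definition good (X : I -> R) := forall b c : I, (b < c)%N ->
  0 < X b - X c /\ forall k, (k <= m)%N -> X b - X c != k%:R.

Definition rowset (X : I -> R) (a : I) : {set I * 'I_m} :=
  [set t : I * 'I_m | (a < t.1)%N && ((t.2.+1)%:R < X a - X t.1)].

Definition rsX (X : I -> R) (a : I) := #|rowset X a|.

Definition rowP (X Y : I -> R) (b : I) := forall (c : I) k, (b < c)%N -> (k <= m)%N ->
  (k%:R < X b - X c) = (k%:R < Y b - Y c).

Definition ltX (X : I -> R) : rel (I * 'I_m) :=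
  fun t t' => X t.1 + (t.2 : nat)%:R < X t'.1 + (t'.2 : nat)%:R.

Lemma ltX_eq X Y (b : I) : good X -> good Y -> (forall b' : I, (b < b')%N -> rowP X Y b') ->
  forall t t' : I * 'I_m, (b < t.1)%N -> (b < t'.1)%N -> ltX X t t' = ltX Y t t'.
Proof.
move=> gX gY IH [c j] [c' j'] /= bc bc'; rewrite /ltX /=.
have [cc'|c'c|e] := ltngtP c c'.
- have [jj|jj] := leqP j' j.
  + have h1 : (j' : nat)%:R <= (j : nat)%:R :> R by rewrite ler_nat.
    have h2 := (gX c c' cc').1; have h3 := (gY c c' cc').1.
    by apply/idP/idP; lra.
  + have ed : (j' : nat)%:R = (j : nat)%:R + (j' - j)%:R :> R by rewrite -natrD subnKC // ltnW.
    have dm : (j' - j <= m)%N by apply: leq_trans (leq_subr _ _) (ltnW (ltn_ord j')).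
    have h := IH c bc c' (j' - j)%N cc' dm.
    have n1 := (gX c c' cc').2 _ dm; have n2 := (gY c c' cc').2 _ dm.
    rewrite ed; move: h n1 n2; set d := (j' - j)%N%:R.
    move=> h n1 n2.
    have e1 : (X c + (j : nat)%:R < X c' + ((j : nat)%:R + d)) = ~~ (d < X c - X c').
      rewrite -leNgt le_eqVlt (negPf n1) /=; apply/idP/idP; lra.
    have e2 : (Y c + (j : nat)%:R < Y c' + ((j : nat)%:R + d)) = ~~ (d < Y c - Y c').
      rewrite -leNgt le_eqVlt (negPf n2) /=; apply/idP/idP; lra.
    by rewrite e1 e2 h.
- have [jj|jj] := leqP j j'.
  + have h1 : (j : nat)%:R <= (j' : nat)%:R :> R by rewrite ler_nat.
    have h2 := (gX c' c c'c).1; have h3 := (gY c' c c'c).1.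
    by apply/idP/idP; lra.
  + have ed : (j : nat)%:R = (j' : nat)%:R + (j - j')%:R :> R by rewrite -natrD subnKC // ltnW.
    have dm : (j - j' <= m)%N by apply: leq_trans (leq_subr _ _) (ltnW (ltn_ord j)).
    have h := IH c' bc' c (j - j')%N c'c dm.
    rewrite ed; move: h; set d := (j - j')%N%:R => h.
    have e1 : (X c + ((j' : nat)%:R + d) < X c' + (j' : nat)%:R) = (d < X c' - X c).
      apply/idP/idP; lra.
    have e2 : (Y c + ((j' : nat)%:R + d) < Y c' + (j' : nat)%:R) = (d < Y c' - Y c).
      apply/idP/idP; lra.
    by rewrite e1 e2 h.
- have -> : c' = c by apply/val_inj.
  by rewrite !ltrD2l.
Qed.


Lemma ltX_tot X (b : I) : (forall b' c : I, (b < b')%N -> (b' < c)%N ->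
  0 < X b' - X c /\ forall k, (k <= m)%N -> X b' - X c != k%:R) ->
  forall t t' : I * 'I_m, (b < t.1)%N -> (b < t'.1)%N ->
  t != t' -> ltX X t t' || ltX X t' t.
Proof.
move=> gX [c j] [c' j'] /= bc bc' ne; rewrite /ltX /=.
apply: lt_total.
have [cc'|c'c|e] := ltngtP c c'.
- have [jj|jj] := leqP j' j.
  + have h1 : (j' : nat)%:R <= (j : nat)%:R :> R by rewrite ler_nat.
    have h2 := (gX c c' bc cc').1.
    by rewrite gt_eqF //; lra.
  + have ed : (j' : nat)%:R = (j : nat)%:R + (j' - j)%:R :> R by rewrite -natrD subnKC // ltnW.
    have dm : (j' - j <= m)%N by apply: leq_trans (leq_subr _ _) (ltnW (ltn_ord j')).
    have n1 := (gX c c' bc cc').2 _ dm.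
    rewrite ed; move: n1; set d := (j' - j)%N%:R => n1.
    apply/eqP => e; move/eqP: n1; apply; lra.
- have [jj|jj] := leqP j j'.
  + have h1 : (j : nat)%:R <= (j' : nat)%:R :> R by rewrite ler_nat.
    have h2 := (gX c' c bc' c'c).1.
    by rewrite lt_eqF //; lra.
  + have ed : (j : nat)%:R = (j' : nat)%:R + (j - j')%:R :> R by rewrite -natrD subnKC // ltnW.
    have dm : (j - j' <= m)%N by apply: leq_trans (leq_subr _ _) (ltnW (ltn_ord j)).
    have n1 := (gX c' c bc' c'c).2 _ dm.
    rewrite ed; move: n1; set d := (j - j')%N%:R => n1.
    apply/eqP => e; move/eqP: n1; apply; lra.
- have ec : c' = c by apply/val_inj.
  subst c'.
  have jj : j != j' by apply: contra ne => /eqP ->.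
  rewrite (inj_eq (addrI _)) eqr_nat.
  exact: jj.
Qed.

Lemma rowset_down X (b : I) (t t' : I * 'I_m) : (b < t.1)%N -> t' \in rowset X b ->
  ltX X t t' -> t \in rowset X b.
Proof.
case: t t' => [c j] [c' j'] /= bc; rewrite /rowset !inE /= /ltX /= => /andP[_ h1] h2.
rewrite bc /=; move: h1 h2; rewrite -!natr1; lra.
Qed.

Lemma row_step X Y (b : I) : good X -> good Y -> (forall b' : I, (b < b')%N -> rowP X Y b') ->
  rsX X b = rsX Y b -> rowP X Y b.
Proof.
move=> gX gY IH eqrs.
pose D := [set t : I * 'I_m | (b < t.1)%N].
have AD : rowset X b \subset D.
  by apply/fintype.subsetP => t; rewrite !inE => /andP[].
have BD : rowset Y b \subset D.
  by apply/fintype.subsetP => t; rewrite !inE => /andP[].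
have tot : {in D &, forall t t', t != t' -> ltX X t t' || ltX X t' t}.
  move=> t t' h1 h2 ne; rewrite !inE in h1 h2; exact: (@ltX_tot X b (fun b' c _ h => gX b' c h) t t' h1 h2 ne).
have eAB : rowset X b = rowset Y b.
  have := @downset_eq _ D (rowset X b) (rowset Y b) (ltX X) AD BD tot.
  move=> H; apply: H; last exact: eqrs.
  - move=> t t' h1 h2 h3; rewrite inE in h1; exact: rowset_down h1 h2 h3.
  - move=> t t' h1 h2 h3; rewrite inE in h1.
    have h4 : (b < t'.1)%N by move: (h2); rewrite inE => /andP[].
    apply: (rowset_down h1 h2).
    by rewrite -(ltX_eq gX gY IH h1 h4).
move=> c k bc km.
case: k km => [|j] km.
  by rewrite (gX b c bc).1 (gY b c bc).1.
have jm : (j < m)%N by [].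
have := congr1 (fun S : {set I * 'I_m} => (c, Ordinal jm) \in S) eAB.
by rewrite /rowset !inE /= bc.
Qed.

Lemma inj_rows X Y : good X -> good Y -> (forall a, rsX X a = rsX Y a) ->
  forall b, rowP X Y b.
Proof.
move=> gX gY eqrs.
suff H : forall d (b : I), (n - b <= d)%N -> rowP X Y b by move=> b; exact: H (n - b)%N _ _.
elim=> [|d IHd] b hb.
  move=> c k bc; exfalso; have := ltn_ord c; rewrite ltnS => cn.
  by move: hb; rewrite leqn0 subn_eq0 => bn; have := leq_trans bc (leq_trans cn bn); rewrite ltnn.
apply: row_step => // b' bb'; apply: IHd.
have := ltn_ord b'; rewrite ltnS => b'n.
move: hb bb'; lia.
Qed.


Definition Dset (a : I) : {set I * 'I_m} := [set t : I * 'I_m | (a < t.1)%N].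

Lemma card_Dset a : #|Dset a| = ((n - a) * m)%N.
Proof.
have -> : Dset a = finset.setX [set c : I | (a < c)%N] [set: 'I_m].
  by apply/finset.setP => -[c j]; rewrite !inE andbT.
by rewrite cardsX card_gt cardsT card_ord subSS.
Qed.

Lemma rowset_D X a : rowset X a \subset Dset a.
Proof. by apply/fintype.subsetP => t; rewrite !inE => /andP[]. Qed.

Lemma rsX_le X a : (rsX X a <= (n - a) * m)%N.
Proof. by rewrite -card_Dset; apply: subset_leq_card; exact: rowset_D. Qed.

Lemma rsX_mono X (a a' : I) : good X -> (a <= a')%N -> (rsX X a' <= rsX X a)%N.
Proof.
move=> gX aa'; apply: subset_leq_card; apply/fintype.subsetP => -[c j].
rewrite !inE /= => /andP[h1 h2].
have ac : (a < c)%N by apply: leq_ltn_trans aa' h1.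
rewrite ac /=.
have [e|ne] := eqVneq a a'; first by rewrite e.
have lt : (a < a')%N by rewrite ltn_neqAle aa' andbT; apply: contra ne => /eqP e; apply/eqP/val_inj.
have := (gX a a' lt).1; move: h2; lra.
Qed.

Lemma rsX_full X (i : 'I_n) : good X -> (0 < m)%N ->
  rsX X (widen_ord (leqnSn n) i) = ((n - i) * m)%N <->
  m%:R < X (widen_ord (leqnSn n) i) - X (lift ord0 i).
Proof.
move=> gX m0; set a := widen_ord _ i; set a' := lift ord0 i.
have aa' : (a < a')%N by rewrite /a /a' /= /bump leq0n add1n.
have va : (a : nat) = i by [].
split.
- move=> e.
  have eq : rowset X a = Dset a.
    apply/eqP; rewrite eqEcard rowset_D /= card_Dset.
    by rewrite /rsX in e; rewrite e va.
  have mm : (m.-1 < m)%N by rewrite prednK.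
  have := congr1 (fun S : {set I * 'I_m} => (a', Ordinal mm) \in S) eq.
  by rewrite !inE /= aa' /= prednK // => ->.
- move=> h; rewrite /rsX -va -card_Dset; suff -> : rowset X a = Dset a by [].
  
  apply/finset.setP => -[c j]; rewrite !inE /=.
  case ac: (a < c)%N => //=; apply/idP.
  have jm : ((j : nat).+1 <= m)%N := ltn_ord j.
  have jmr : ((j : nat).+1%:R <= m%:R :> R) by rewrite ler_nat.
  have [e|ne] := eqVneq a' c; first by rewrite -e; lra.
  have lt : (a' < c)%N.
    rewrite ltn_neqAle; apply/andP; split.
      by apply: contra ne => /eqP e; apply/eqP/val_inj.
    by move: ac; rewrite /a /a' /= /bump leq0n add1n.
  have := (gX a' c lt).1; lra.
Qed.


Definition goodfrom (p : nat) (X : I -> R) := forall b c : I, (p <= b)%N -> (b < c)%N ->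
  0 < X b - X c /\ forall k, (k <= m)%N -> X b - X c != k%:R.

Section Construct.
Variable lamn : nat -> nat.
Hypothesis H1 : forall a, (a < n)%N -> (lamn a.+1 <= lamn a)%N.
Hypothesis H2 : forall a, (a < n)%N -> (lamn a <= (n - a) * m)%N.
Hypothesis H3 : lamn n = 0%N.

Lemma construct_step (p : nat) (hp : (p < n)%N) X :
  goodfrom p.+1 X -> (forall b : I, (p < b)%N -> rsX X b = lamn b) ->
  exists X', goodfrom p X' /\ forall b : I, (p <= b)%N -> rsX X' b = lamn b.
Proof.
move=> gX rX.
pose a : I := Ordinal (leqW hp).
pose a' : I := Ordinal (hp : (p.+1 < n.+1)%N).
have va : (a : nat) == p by [].
have va' : (a' : nat) == p.+1 by [].
pose f := fun u : I * 'I_m => X u.1 + (u.2 : nat).+1%:R.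
pose s := [seq f u | u <- enum (Dset a)].
have gX' : forall b' c : I, (a < b')%N -> (b' < c)%N ->
    0 < X b' - X c /\ forall k, (k <= m)%N -> X b' - X c != k%:R.
  by move=> b' c h1 h2; apply: gX => //.
have inj : {in enum (Dset a) &, injective f}.
  move=> [c j] [c' j']; rewrite !mem_enum !inE /= => h1 h2 e.
  apply/eqP; apply/negP => /negP ne.
  have := @ltX_tot X a gX' (c, j) (c', j') h1 h2 ne; rewrite /ltX /=.
  move: e; rewrite /f /= -!natr1 => e /orP[] h; lra.
have us : uniq s by rewrite map_inj_in_uniq ?enum_uniq.
have Ls : X a' \notin s.
  apply/mapP => -[[c j]]; rewrite mem_enum inE /= /f /= => ac e.
  have j0 : (0 < (j : nat).+1%:R :> R) by rewrite ltr0n.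
  have [ca'|a'c|ec] := ltngtP c a'.
  - by move: ca'; rewrite (eqP va') ltnS leqNgt ac.
  - have jm : ((j : nat).+1 <= m)%N := ltn_ord j.
    have := (gX a' c (leqnn _) a'c).2 _ jm; rewrite e.
    have -> : X c + (j : nat).+1%:R - X c = (j : nat).+1%:R by ring.
    by rewrite eqxx.
  - have ec' : c = a' by apply/val_inj.
    by move: e; rewrite ec'; clear ec' ec; lra.
have cL : count (fun v : R => (v < X a')%R) s = rsX X a'.
  rewrite count_map count_enum_set /rsX; apply: eq_card => -[c j].
  rewrite !inE /= /f /=.
  have [ca'|a'c|ec] := ltngtP c (p.+1).
  - by [].
  - by rewrite /=; apply/idP/idP; lra.
  - have ec' : c = a' by apply/val_inj.
    clear ec; rewrite ec'; clear ec'.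
    have j0 : (0 < (j : nat).+1%:R :> R) by rewrite ltr0n.
    by rewrite /=; apply/negP => h; lra.
have sz : size s = ((n - p) * m)%N by rewrite size_map -cardE card_Dset (eqP va).
have r1 : (count (fun v : R => (v < X a')%R) s <= lamn p)%N.
  by rewrite cL rX ?(eqP va') //; exact: H1.
have r2 : (lamn p <= size s)%N by rewrite sz; exact: H2.
have [t [Lt ts ct]] := pick_count us Ls r1 r2.
pose X' := fun c : I => if c == a then t else X c.
have X'a : X' a = t by rewrite /X' eqxx.
have X'o c : c != a -> X' c = X c by move=> h; rewrite /X' (negPf h).
have gtne (c : I) : (a < c)%N -> c != a.
  by move=> ac; apply/eqP => e; move: ac; rewrite e ltnn.
exists X'; split.
  move=> b c pb bc.
  have [eba|nba] := eqVneq b a.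
    subst b; rewrite X'a X'o ?gtne //.
    have tc : 0 < t - X c.
      have [ca'|a'c|ec] := ltngtP c a'.
      - by move: ca'; rewrite (eqP va') ltnS leqNgt bc.
      - have := (gX a' c (leqnn _) a'c).1; lra.
      - have ec' : c = a' by apply/val_inj.
        by rewrite ec'; lra.
    split => // -[|j] jm.
      by rewrite gt_eqF.
    apply/negP => /eqP e.
    have jm' : (j < m)%N by [].
    move/negP: ts; apply; apply/mapP; exists (c, Ordinal jm').
      by rewrite mem_enum inE.
    by rewrite /f /=; lra.
  have ab : (a < b)%N.
    rewrite ltn_neqAle pb andbT (eqP va); apply: contra nba => /eqP e; apply/eqP/val_inj.
    by rewrite /= e.
  rewrite !X'o ?gtne //; first exact: gX.
  exact: ltn_trans ab bc.
move=> b pb.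
have [eba|nba] := eqVneq b a.
  subst b; rewrite -ct count_map count_enum_set /rsX; apply: eq_card => -[c j]; rewrite !inE /= /f /=.
  case ac: (a < c)%N => //=.
  rewrite X'a X'o ?gtne //.
  by apply/idP/idP; lra.
have ab : (a < b)%N.
  rewrite ltn_neqAle pb andbT (eqP va); apply: contra nba => /eqP e; apply/eqP/val_inj.
  by rewrite /= e.
rewrite -rX // /rsX; apply: eq_card => -[c j]; rewrite !inE /=.
case bc: (b < c)%N => //=.
by rewrite !X'o ?gtne //; exact: ltn_trans ab bc.
Qed.

Lemma construct_all : exists X, goodfrom 0 X /\ forall b : I, rsX X b = lamn b.
Proof.
suff H : forall d, (d <= n)%N -> exists X, goodfrom (n - d) X /\
    forall b : I, (n - d <= b)%N -> rsX X b = lamn b.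
  have [X [gX rX]] := H n (leqnn n); exists X; rewrite subnn in gX rX; split => //.
  by move=> b; exact: rX.
elim=> [|d IH] hd.
  exists (fun=> 0); rewrite subn0; split.
    move=> b c nb bc; exfalso; have := ltn_ord c; rewrite ltnS => cn.
    by have := leq_trans bc (leq_trans cn nb); rewrite ltnn.
  move=> b nb.
  have bn : (b : nat) = n by apply/eqP; rewrite eqn_leq nb -ltnS ltn_ord.
  rewrite bn H3 /rsX; apply/eqP; rewrite cards_eq0; apply/eqP/finset.setP => -[c j].
  rewrite !inE /= bn; have := ltn_ord c; rewrite ltnS leqNgt => /negPf -> //.
have [X [gX rX]] := IH (ltnW hd).
have hp : (n - d.+1 < n)%N by move: hd; lia.
have e : (n - d.+1).+1 = (n - d)%N by move: hd; lia.
by apply: (construct_step hp (X := X)); rewrite e.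
Qed.

End Construct.

End Comb.

Local Open Scope classical_set_scope.

Section Main.
Variable R : realType.
Variables n m : nat.
Hypothesis hm : (0 < m)%N.
Local Notation V := 'rV[R]_(n.+1).
Local Notation C := (@cat_complement R n m).
Local Notation I := 'I_n.+1.

Lemma good_of x : C x -> dominant_cone x -> good m (co x).
Proof.
move=> Cx Dx b c bc; split.
  rewrite lt_neqAle eq_sym; apply/andP; split; last exact: Dx.
  by have := C_neq Cx bc (leq0n m).
by move=> k km; exact: C_neq Cx bc km.
Qed.

Lemma reg_pt (Rg : set V) : is_dominant_region m Rg -> exists x, Rg x.
Proof. by case=> -[x Cx ->] _; exists x; exact: connected_component_refl. Qed.

Lemma reg_good (Rg : set V) z : is_dominant_region m Rg -> Rg z ->
  [/\ C z, dominant_cone z & Rg = connected_component C z].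
Proof.
case=> -[x Cx ->] sub hz; split.
- exact: connected_component_sub hz.
- exact: sub.
- exact: same_connected_component.
Qed.

Lemma rsX_sgeq (x y : V) (a : I) : sgeq m x y -> rsX m (co x) a = rsX m (co y) a.
Proof.
move=> sxy; apply: eq_card => -[c j]; rewrite !inE /=.
case ac: (a < c)%N => //=.
exact: (sxy a c (j.+1) ac (ltn_ord j)).
Qed.

Definition pt (Rg : dominant_regions R n m) : V :=
  projT1 (cid (reg_pt (proj2_sig Rg))).

Lemma pt_in Rg : proj1_sig Rg (pt Rg).
Proof. exact: (projT2 (cid (reg_pt (proj2_sig Rg)))). Qed.

Definition lamR (Rg : dominant_regions R n m) : {ffun 'I_n -> nat} :=
  [ffun i => rsX m (co (pt Rg)) (widen_ord (leqnSn n) i)].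

Lemma lamR_part Rg : @is_bounded_partition n m (lamR Rg).
Proof.
have [Cz Dz _] := reg_good (proj2_sig Rg) (pt_in Rg).
have gz := good_of Cz Dz.
apply/andP; split.
  apply/forallP => i; apply/forallP => j; apply/implyP => ij.
  by rewrite !ffunE; apply: rsX_mono.
apply/forallP => i; rewrite ffunE mulnC.
exact: rsX_le.
Qed.

Definition phi (Rg : dominant_regions R n m) : bounded_partitions n m :=
  exist _ (lamR Rg) (lamR_part Rg).

Lemma rsX_max (X : I -> R) : rsX m X ord_max = 0%N.
Proof.
apply/eqP; rewrite cards_eq0; apply/eqP/finset.setP => -[c j]; rewrite !inE /=.
by have := ltn_ord c; rewrite ltnS leqNgt => /negPf ->.
Qed.

Lemma phi_inj : injective phi.
Proof.
move=> Rg1 Rg2 e.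
have e' : lamR Rg1 = lamR Rg2 by move: (congr1 val e).
have [C1 D1 E1] := reg_good (proj2_sig Rg1) (pt_in Rg1).
have [C2 D2 E2] := reg_good (proj2_sig Rg2) (pt_in Rg2).
have rs : forall a : I, rsX m (co (pt Rg1)) a = rsX m (co (pt Rg2)) a.
  move=> a; have [an|] := ltnP a n.
    have := congr1 (fun f : {ffun 'I_n -> nat} => f (Ordinal an)) e'.
    rewrite !ffunE.
    have -> : widen_ord (leqnSn n) (Ordinal an) = a by apply/val_inj.
    by [].
  have := ltn_ord a; rewrite ltnS => h1 h2.
  have -> : a = ord_max by apply/val_inj; apply/eqP; rewrite eqn_leq h1 h2.
  by rewrite !rsX_max.
have sg : sgeq m (pt Rg1) (pt Rg2).
  move=> a b k ab km.
  exact: (inj_rows (good_of C1 D1) (good_of C2 D2) rs ab km).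
have cc := sgeq_comp C1 C2 sg.
have E : proj1_sig Rg1 = proj1_sig Rg2 by rewrite E1 E2; exact: same_connected_component.
move: Rg1 Rg2 e e' C1 C2 D1 D2 E1 E2 rs sg cc E => [R1 p1] [R2 p2] /= *.
subst R2; congr exist; exact: Prop_irrelevance.
Qed.


Lemma phi_surj (lam : bounded_partitions n m) : exists Rg, phi Rg = lam.
Proof.
case: lam => lam plam.
pose lamn a := odflt 0%N (omap lam (insub a)).
have lamnE (i : 'I_n) : lamn i = lam i by rewrite /lamn valK.
have lamn_out a : (n <= a)%N -> lamn a = 0%N.
  by move=> na; rewrite /lamn insubF // ltnNge na.
have /andP[/forallP mono /forallP bnd] := plam.
have H1 a : (a < n)%N -> (lamn a.+1 <= lamn a)%N.
  move=> an; have [a1n|] := ltnP a.+1 n; last by move/lamn_out ->.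
  have := lamnE (Ordinal an); have := lamnE (Ordinal a1n); rewrite /= => -> ->.
  by have := forallP (mono (Ordinal an)) (Ordinal a1n); rewrite /= leqnSn.
have H2 a : (a < n)%N -> (lamn a <= (n - a) * m)%N.
  move=> an; have := lamnE (Ordinal an); rewrite /= => ->.
  by rewrite mulnC; exact: (bnd (Ordinal an)).
have H3 : lamn n = 0%N by apply: lamn_out.
have [X [gX rX]] := @construct_all R n m lamn H1 H2 H3.
pose mean := (\sum_(c < n.+1) X c) / (n.+1)%:R.
pose x : V := \row_c (X c - mean).
have cox c : co x c = X c - mean by rewrite /co mxE.
have prx b c : proot x b c = X b - X c by rewrite /proot !cox; ring.
have Cx : C x.
  split.
    rewrite /Vspace /=; under eq_bigr do rewrite cox.
    rewrite sumrB sumr_const card_ord /mean.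
    rewrite -[X in _ - X]mulr_natr divfK; first by rewrite subrr.
    by rewrite pnatr_eq0.
  move=> a b k [ab km] [_ h]; have := (gX a b (leq0n _) ab).2 k km.
  by rewrite -prx h eqxx.
have Dx : dominant_cone x.
  by move=> a b ab; rewrite prx; apply: ltW; exact: (gX a b (leq0n _) ab).1.
pose Rg := connected_component C x.
have dRg : is_dominant_region m Rg.
  split; first by exists x.
  move=> z hz a b ab; have := comp_sgeq hz ab (leq0n m).
  have := Dx a b ab; rewrite le_eqVlt => /orP[/eqP e|->].
    by exfalso; move: (C_neq Cx ab (leq0n m)); rewrite -e eqxx.
  by move/esym => h; apply: ltW; move: h; rewrite /= => ->.
exists (exist _ Rg dRg).
apply: val_inj => /=; apply/ffunP => i; rewrite ffunE.
have hp := pt_in (exist _ Rg dRg); rewrite /= in hp.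
rewrite -(rsX_sgeq _ (comp_sgeq hp)).
have -> : rsX m (co x) (widen_ord (leqnSn n) i) = rsX m X (widen_ord (leqnSn n) i).
  apply: eq_card => -[c j]; rewrite !inE /=; by rewrite -prx.
by rewrite rX -lamnE.
Qed.

Lemma phi_wall (i : 'I_n) Rg :
  separating_wall m (proj1_sig Rg) (sroot_l i) (sroot_r i) m <->
  proj1_sig (phi Rg) i = ((n - i) * m)%N.
Proof.
have [Cz Dz Ez] := reg_good (proj2_sig Rg) (pt_in Rg).
rewrite /= ffunE.
have gz := good_of Cz Dz.
have rf := rsX_full i gz hm.
have p0 : proot (0 : V) (sroot_l i) (sroot_r i) = 0 by rewrite /proot /co !mxE subrr.
have mpos : 0 < m%:R :> R by rewrite ltr0n.
split.
  case=> _ _ h; apply/rf; have := h _ (pt_in Rg); rewrite p0 /proot => h'.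
  nra.
move=> /rf hgap; split.
- by split.
- rewrite Ez; exact: facet Cz Dz hgap.
- move=> y hy; rewrite p0.
  rewrite Ez in hy.
  have ab : (sroot_l i < sroot_r i)%N by rewrite /= /bump leq0n add1n ltnSn.
  have := comp_sgeq hy ab (leqnn m).
  rewrite /proot hgap => /esym my.
  rewrite /proot in my.
  nra.
Qed.

End Main.

Theorem theorem1p3 (R : realType) (n m : nat) (hn : (0 < n)%N) (hm : (0 < m)%N) :
  exists phi : dominant_regions R n m -> bounded_partitions n m,
    bijective phi /\
    forall (i : 'I_n) (Rg : dominant_regions R n m),
      separating_wall m (proj1_sig Rg) (sroot_l i) (sroot_r i) m <->
      proj1_sig (phi Rg) i = ((n - i) * m)%N.
Proof.
exists (@phi R n m); split; last by move=> i Rg; exact: phi_wall.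
pose g lam := projT1 (cid (@phi_surj R n m lam)).
exists g.
  move=> Rg; apply: phi_inj; exact: (projT2 (cid (@phi_surj R n m (phi Rg)))).
move=> lam; exact: (projT2 (cid (@phi_surj R n m lam))).
Qed.
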